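(* Let $\Gamma\le\mathrm{Iso}(\mathbb{R}^{r,s})$ be a subgroup whose centralizer in $\mathrm{Iso}(\mathbb{R}^{r,s})$ has an open orbit in $\mathbb{R}^{r,s}$, and let $n=r+s$. If the linear holonomy group $\mathrm{hol}(\Gamma)$ is non-abelian, then $n\ge 8$.
   Context: $\mathbb{R}^{r,s}$ denotes $\mathbb{R}^{n}$, $n=r+s$, with a nondegenerate symmetric bilinear form of signature $(r,s)$; $\mathrm{Iso}(\mathbb{R}^{r,s})$ is its group of affine isometries, whose elements are written $\gamma=(I+A,v)\colon x\mapsto(I+A)x+v$; $\mathrm{hol}(\Gamma)=\{I+A\mid (I+A,v)\in\Gamma\}$. Known facts (Wolf) for such $\Gamma$: every $(I+A,v)\in\Gamma$ satisfies $A^2=0$, $Av=0$, $\langle Ax,y\rangle=-\langle x,Ay\rangle$, $\ker A=(\operatorname{im}A)^\perp$, $\operatorname{im}A$ totally isotropic; for $\gamma_i=(I+A_i,v_i)\in\Gamma$ one has $A_1A_2A_3=0$ and $[\gamma_1,\gamma_2]=(I+2A_1A_2,2A_1v_2)$; $\mathrm{hol}(\Gamma)$ is abelian iff $A_1A_2=0$ for all $(I+A_1,v_1),(I+A_2,v_2)\in\Gamma$. *)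

(* Defs.v *)
From Stdlib Require Import Reals.
From mathcomp Require Import all_boot.

Definition vec (n : nat) := 'I_n -> R.

Definition vadd {n} (x y : vec n) : vec n := fun i => Rplus (x i) (y i).
Definition vsub {n} (x y : vec n) : vec n := fun i => Rminus (x i) (y i).

Definition mxact {n} (M : 'I_n -> 'I_n -> R) (x : vec n) : vec n :=
  fun i => \big[Rplus/R0]_(j < n) Rmult (M i j) (x j).

Definition sgn_rs (r : nat) {n} (i : 'I_n) : R :=
  if (nat_of_ord i < r)%N then R1 else Ropp R1.

Definition form (r s : nat) (x y : vec (r + s)) : R :=
  \big[Rplus/R0]_(i < r + s) Rmult (sgn_rs r i) (Rmult (x i) (y i)).

Definition isIso (r s : nat) (f : vec (r + s) -> vec (r + s)) : Prop :=
  exists (M : 'I_(r + s) -> 'I_(r + s) -> R) (v : vec (r + s)),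
    (forall x, f x = vadd (mxact M x) v) /\
    (forall x y, form r s (mxact M x) (mxact M y) = form r s x y).

Definition is_subgroup_Iso (r s : nat) (G : (vec (r + s) -> vec (r + s)) -> Prop)
  : Prop :=
  (forall f, G f -> isIso r s f) /\
  G (fun x => x) /\
  (forall f g, G f -> G g -> G (fun x => f (g x))) /\
  (forall f, G f -> exists g, G g /\ (forall x, g (f x) = x) /\ (forall x, f (g x) = x)).

Definition centralizer_Iso (r s : nat) (G : (vec (r + s) -> vec (r + s)) -> Prop)
  (h : vec (r + s) -> vec (r + s)) : Prop :=
  isIso r s h /\ (forall g, G g -> forall x, h (g x) = g (h x)).

Definition iso_orbit {n} (H : (vec n -> vec n) -> Prop) (x : vec n) (y : vec n) : Prop :=
  exists h, H h /\ y = h x.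

Definition is_open {n} (U : vec n -> Prop) : Prop :=
  forall y, U y -> exists eps, Rlt R0 eps /\
    forall z : vec n, (forall i, Rlt (Rabs (Rminus (z i) (y i))) eps) -> U z.

(* Linear part of an affine map f: x |-> f x - f 0 (i.e. I + A for γ = (I+A,v)). *)
Definition linpart {n} (f : vec n -> vec n) : vec n -> vec n :=
  fun x => vsub (f x) (f (fun _ => R0)).

Definition hol_abelian {n} (G : (vec n -> vec n) -> Prop) : Prop :=
  forall g1 g2, G g1 -> G g2 ->
    forall x, linpart g1 (linpart g2 x) = linpart g2 (linpart g1 x).

(* Main.v *)
Require Import Defs.
From Stdlib Require Import Reals.
From mathcomp Require Import all_boot.
From HB Require Import structures.
From Stdlib Require Import Lra Classical ClassicalEpsilon FunctionalExtensionality.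
From mathcomp Require Import all_algebra.
Require Import Defs.
Set Implicit Arguments. Unset Strict Implicit. Unset Printing Implicit Defensive.
Import GRing.Theory.


Definition Req_bool (x y : R) : bool := if Req_EM_T x y then true else false.
Lemma Req_boolP : Equality.axiom Req_bool.
Proof. move=> x y; rewrite /Req_bool; case: Req_EM_T => H; constructor; auto. Qed.
HB.instance Definition _ := hasDecEq.Build R Req_boolP.

Definition Rfind (P : pred R) (n : nat) : option R :=
  if excluded_middle_informative (exists x, P x) then Some (epsilon (inhabits R0) (fun x => P x)) else None.
Lemma Rfind_correct P n x : Rfind P n = Some x -> P x.
Proof. rewrite /Rfind; case: excluded_middle_informative => // H [<-].
exact: (epsilon_spec (inhabits R0) (fun x => P x) H). Qed.
Lemma Rfind_complete (P : pred R) : (exists x, P x) -> exists n, Rfind P n.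
Proof. move=> H; exists 0%N; rewrite /Rfind; case: excluded_middle_informative => //. Qed.
Lemma Rfind_ext (P Q : pred R) : P =1 Q -> Rfind P =1 Rfind Q.
Proof. move=> H; have -> : P = Q by apply: functional_extensionality. by []. Qed.
HB.instance Definition _ := hasChoice.Build R Rfind_correct Rfind_complete Rfind_ext.

Lemma RaddA : associative Rplus. Proof. move=> *; ring. Qed.
Lemma RaddC : commutative Rplus. Proof. move=> *; ring. Qed.
Lemma Radd0 : left_id R0 Rplus. Proof. move=> *; ring. Qed.
Lemma RaddN : left_inverse R0 Ropp Rplus. Proof. move=> *; ring. Qed.
HB.instance Definition _ := GRing.isZmodule.Build R RaddA RaddC Radd0 RaddN.
Lemma RmulA : associative Rmult. Proof. move=> *; ring. Qed.
Lemma RmulC : commutative Rmult. Proof. move=> *; ring. Qed.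
Lemma Rmul1 : left_id R1 Rmult. Proof. move=> *; ring. Qed.
Lemma RmulD : left_distributive Rmult Rplus. Proof. move=> *; ring. Qed.
Lemma R1n0 : R1 != R0. Proof. by apply/eqP; apply: R1_neq_R0. Qed.
HB.instance Definition _ := GRing.Zmodule_isComNzRing.Build R RmulA RmulC Rmul1 RmulD R1n0.
Lemma RmulV : forall x : R, x != 0%R -> (Rinv x * x)%R = 1%R.
Proof. move=> x /eqP H; apply: Rinv_l. exact H. Qed.
Lemma Rinv0' : Rinv 0%R = 0%R. Proof. exact: Rinv_0. Qed.
HB.instance Definition _ := GRing.ComNzRing_isField.Build R RmulV Rinv0'.

Local Open Scope ring_scope.

Lemma rank_ge2_antisym (F : fieldType) n (B : 'M[F]_n) :
  (2%:R != 0 :> F) -> B^T = - B -> B != 0 -> (2 <= \rank B)%N.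
Proof.
move=> h2 hB hnz.
have : ~~ [forall i, forall j, B i j == 0].
  apply: contra hnz => /forallP H; apply/eqP/matrixP => i j; rewrite mxE.
  exact/eqP/(forallP (H i)).
rewrite negb_forall => /existsP [i]; rewrite negb_forall => /existsP [j hij].
have Bs : forall a b, B b a = - B a b.
  by move=> a b; have := congr1 (fun M : 'M_n => M a b) hB; rewrite /= !mxE.
have B0 : forall a, B a a = 0.
  move=> a; have h := Bs a a.
  have : 2%:R * B a a == 0 by rewrite mulr_natl mulr2n {1}h addNr.
  by rewrite mulf_eq0 (negbTE h2) => /eqP.
set f := fun k : 'I_2 => if val k == 0%N then i else j.
set Q := mxsub f f B.
have hQ : Q *m Q = (- (B i j * B i j))%:M.
  apply/matrixP => k l; rewrite !mxE !big_ord_recr big_ord0 /= !mxE /f /=.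
  case: k => [[|[|//]] hk] /=; case: l => [[|[|//]] hl] /=;
    rewrite ?B0 ?(Bs j i) ?mul0r ?mulr0 ?add0r ?addr0 ?mulrN ?mulNr ?opprK ?mulr1n ?mulr0n //.
have hu : Q \in unitmx.
  have hb : - (B i j * B i j) != 0 by rewrite oppr_eq0 mulf_neq0.
  have := @mulmx1_unit _ _ Q ((- (B i j * B i j))^-1 *: Q).
  rewrite -scalemxAr hQ scale_scalar_mx mulVf // => /(_ erefl) [] //.
have -> : (2 = \rank Q)%N by rewrite mxrank_unit.
have -> : Q = rowsub f (colsub f B) by apply/matrixP => k l; rewrite !mxE.
rewrite rowsubE; apply: leq_trans (mxrankM_maxr _ _) _.
rewrite -[B]mulmx1 -mulmx_colsub mulmx1; exact: mxrankM_maxl.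
Qed.

Lemma main_mx (F : fieldType) n (E A1 A2 : 'M[F]_n) :
  (2%:R != 0 :> F) -> E^T = E -> E \in unitmx ->
  A1^T *m E = - (E *m A1) -> A2^T *m E = - (E *m A2) ->
  A1 *m A1 = 0 -> A2 *m A2 = 0 -> A1 *m A2 = - (A2 *m A1) -> A1 *m A2 != 0 ->
  (8 <= n)%N.
Proof.
move=> h2 hE hEu s1 s2 q1 q2 ac nz.
set C := A1 *m A2.
have hc : (2 <= \rank C)%N.
  apply: leq_trans (rank_ge2_antisym h2 _ _) (mxrankM_maxr E C).
  - by rewrite trmx_mul hE /C trmx_mul -mulmxA s1 mulmxN mulmxA [A2^T *m _]mulmxA s2 mulNmx -!mulmxA ac mulmxN.
  - apply/negP => /eqP h; move/negP: nz; apply; apply/eqP.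
    by rewrite -(mulKmx hEu (A1 *m A2)) -/C h mulmx0.
have hF : (\rank C + \rank (A2 *m A1) <= \rank A2)%N.
  have := mxrank_Frobenius A1 A2 A1.
  by rewrite -/C /C ac mulNmx -mulmxA q1 mulmx0 oppr0 mxrank0 addn0.
have hCr : (\rank C <= \rank (A2 *m A1))%N.
  by rewrite /C ac -scaleN1r mxrank_scale.
have h22 := mulmx0_rank_max q2.
have : (4 <= \rank A2)%N.
  apply: leq_trans hF; change (2 + 2 <= \rank C + \rank (A2 *m A1))%N; apply: leq_add => //; exact: leq_trans hc hCr.
move=> h4; apply: leq_trans h22; change (4 + 4 <= \rank A2 + \rank A2)%N; exact: leq_add.
Qed.


Lemma quad_delta (F : fieldType) n (X : 'M[F]_n) i j :
  ((delta_mx i 0 : 'cV_n)^T *m X *m (delta_mx j 0 : 'cV_n)) 0 0 = X i j.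
Proof. by rewrite trmx_delta -rowE -colE !mxE. Qed.

Lemma polar (F : fieldType) n (X : 'M[F]_n) :
  (forall i j, let z := delta_mx i 0 + delta_mx j 0 : 'cV_n in (z^T *m X *m z) 0 0 = 0) ->
  (forall i, ((delta_mx i 0 : 'cV_n)^T *m X *m (delta_mx i 0 : 'cV_n)) 0 0 = 0) ->
  X + X^T = 0.
Proof.
move=> hij hii; have mD : forall A B : 'M[F]_1, (A+B) 0 0 = A 0 0 + B 0 0 by move=> *; rewrite mxE.
apply/matrixP => i j; rewrite !mxE.
have := hij i j; rewrite /= mulmxDr [(_ + _)^T]linearD /= !mulmxDl !mD !quad_delta.
have := hii i; have := hii j; rewrite !quad_delta => -> ->.
by rewrite add0r addr0 addrC.
Qed.

Section RealFacts.
Local Open Scope R_scope.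
Lemma small_ok (eps zk c : R) : Rlt R0 eps -> Rle (Rabs zk) (R1 + R1) ->
  (c = Rdiv eps (INR 8) \/ c = Rplus (Rdiv eps (INR 8)) (Rdiv eps (INR 8))) ->
  Rlt (Rabs (Rmult c zk)) eps.
Proof.
move=> he hz hc; rewrite Rabs_mult.
have h8 : INR 8 = 8 by simpl; lra.
have hc0 : Rle R0 c by case: hc => ->; rewrite h8; lra.
rewrite (Rabs_pos_eq c hc0).
have hz0 := Rabs_pos zk.
case: hc => ->; rewrite h8; nra.
Qed.


Lemma t_nz (eps : R) : Rlt R0 eps -> Rdiv eps (INR 8) <> R0.
Proof. move=> he; have h8 : INR 8 = 8 by simpl; lra. rewrite h8; lra. Qed.
End RealFacts.
Local Open Scope ring_scope.

Lemma expand (F : fieldType) n (E : 'M[F]_n) (D1 D2 Z1 Z2 : 'cV_n) a :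
 (D1 + a *: Z1)^T *m E *m (D2 + a *: Z2) = D1^T *m E *m D2 +
   a *: ((Z1^T *m E *m D2) + (D1^T *m E *m Z2)) + (a*a) *: (Z1^T *m E *m Z2).
Proof.
rewrite [(_ + _)^T]linearD /= [(_ *: _)^T]linearZ /= !mulmxDl !mulmxDr.
rewrite -!scalemxAl -!scalemxAr scalerA scalerDr !addrA.
by congr (_ + _); rewrite -!addrA; congr (_ + _); rewrite addrC.
Qed.

Lemma RE_add (x y : R) : GRing.add x y = Rplus x y. Proof. reflexivity. Qed.
Lemma RE_mul (x y : R) : GRing.mul x y = Rmult x y. Proof. reflexivity. Qed.
Lemma RE_opp (x : R) : GRing.opp x = Ropp x. Proof. reflexivity. Qed.
Lemma RE_0 : (@GRing.zero R) = R0. Proof. reflexivity. Qed.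
Lemma RE_1 : (@GRing.one R) = R1. Proof. reflexivity. Qed.

Lemma addr_eqself (F : fieldType) m n (a b : 'M[F]_(m, n)) : a + b = a -> b = 0.
Proof. by move=> h; rewrite -(addKr a b) h addNr. Qed.

Lemma vanish n (E A1 A2 : 'M[R]_n) (v1 v2 u0 : 'cV[R]_n) (P : 'cV[R]_n -> Prop) (eps : R) :
  Rlt R0 eps ->
  (forall u : 'cV[R]_n, (forall k, Rlt (Rabs (u k 0 - u0 k 0)) eps) -> P u) ->
  (forall u, P u -> (A1 *m u + v1)^T *m E *m (A2 *m u + v2) =
                    (A1 *m u0 + v1)^T *m E *m (A2 *m u0 + v2)) ->
  forall z : 'cV[R]_n, (forall k, Rle (Rabs (z k 0)) (R1 + R1)) ->
  (A1 *m z)^T *m E *m (A2 *m z) = 0.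
Proof.
move=> he hball hq z hz.
set t : R := Rdiv eps (INR 8).
have ht : t <> R0 by exact: t_nz.
set D1 := A1 *m u0 + v1; set D2 := A2 *m u0 + v2.
set Z1 := A1 *m z; set Z2 := A2 *m z.
set L := Z1^T *m E *m D2 + D1^T *m E *m Z2; set Q := Z1^T *m E *m Z2.
have key : forall c, (c = t \/ c = Rplus t t) -> c *: L + (c * c) *: Q = 0.
  move=> c hc.
  have Pu : P (u0 + c *: z).
    apply: hball => k; rewrite !mxE.
    have -> : Rminus (u0 k 0 + c * z k 0) (u0 k 0) = Rmult c (z k 0) by ring.
    exact: small_ok (hz k) hc.
  have := hq _ Pu.
  have e1 : forall (A : 'M[R]_n) v, A *m (u0 + c *: z) + v = (A *m u0 + v) + c *: (A *m z).
    by move=> A v; rewrite mulmxDr -scalemxAr addrAC.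
  rewrite !e1 expand -/D1 -/D2 -/Z1 -/Z2 -addrA => /addr_eqself.
  done.
have k1 := key t (or_introl erefl).
have k2 := key (Rplus t t) (or_intror erefl).
move/eqP: k1; rewrite addr_eq0 => /eqP k1.
move: k2; rewrite -[Rplus t t]/(t + t) scalerDl k1 -!scaleNr -!scalerDl => /eqP.
rewrite scalemx_eq0 => /orP [/eqP hc | /eqP //].
exfalso; apply: ht; move: hc; rewrite !RE_add !RE_mul !RE_opp ?RE_0 => hc; nra.
Qed.


Definition cv n (x : vec n) : 'cV[R]_n := \col_i x i.
Definition vc n (u : 'cV[R]_n) : vec n := fun i => u i 0.
Definition mxo n (M : 'I_n -> 'I_n -> R) : 'M[R]_n := \matrix_(i, j) M i j.
Definition Emx r s : 'M[R]_(r + s) := diag_mx (\row_i sgn_rs r i).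

Lemma cvK n (x : vec n) : vc (cv x) = x.
Proof. by apply: functional_extensionality => i; rewrite /vc /cv mxE. Qed.
Lemma vcK n (u : 'cV[R]_n) : cv (vc u) = u.
Proof. by apply/matrixP => i j; rewrite /vc /cv mxE (ord1 j). Qed.
Lemma cv_inj n (x y : vec n) : cv x = cv y -> x = y.
Proof. by move=> h; rewrite -(cvK x) h cvK. Qed.
Lemma cv_mxact n M (x : vec n) : cv (mxact M x) = mxo M *m cv x.
Proof.
apply/matrixP => i j; rewrite /cv /mxact !mxE.
by apply: eq_bigr => k _; rewrite !mxE.
Qed.
Lemma cv_vadd n (x y : vec n) : cv (vadd x y) = cv x + cv y.
Proof. by apply/matrixP => i j; rewrite !mxE. Qed.
Lemma cv_vsub n (x y : vec n) : cv (vsub x y) = cv x - cv y.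
Proof. by apply/matrixP => i j; rewrite !mxE. Qed.
Lemma cv0 n : cv (fun _ : 'I_n => R0) = 0.
Proof. by apply/matrixP => i j; rewrite !mxE. Qed.

Lemma form_cv r s (x y : vec (r + s)) :
  form r s x y = ((cv x)^T *m Emx r s *m cv y) 0 0.
Proof.
rewrite /form /Emx mul_mx_diag !mxE.
apply: eq_bigr => k _; rewrite !mxE.
rewrite !RE_mul; ring.
Qed.

Lemma iso_mx r s f : isIso r s f ->
  exists (Mx : 'M[R]_(r + s)) (w : 'cV[R]_(r + s)),
    (forall u, cv (f (vc u)) = Mx *m u + w) /\ Mx^T *m Emx r s *m Mx = Emx r s.
Proof.
move=> [M [v [hf hform]]].
exists (mxo M), (cv v); split.
  by move=> u; rewrite hf cv_vadd cv_mxact vcK.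
apply/matrixP => i j.
have := hform (vc (delta_mx i 0)) (vc (delta_mx j 0)).
rewrite !form_cv !cv_mxact !vcK !quad_delta => <-.
by rewrite -(quad_delta ((mxo M)^T *m Emx r s *m mxo M) i j) trmx_mul !mulmxA.
Qed.


Lemma Emx_tr r s : (Emx r s)^T = Emx r s.
Proof. exact: tr_diag_mx. Qed.

Lemma sq1 : Rmult R1 R1 = R1 /\ Rmult (Ropp R1) (Ropp R1) = R1.
Proof. split; ring. Qed.

Lemma Emx_sq r s : Emx r s *m Emx r s = 1%:M.
Proof.
apply/matrixP => i j; rewrite /Emx mul_diag_mx !mxE.
case: eqP => _; rewrite ?mulr1n ?mulr0n ?mulr0 //.
rewrite /sgn_rs; case: ifP => _; [exact: (proj1 sq1) | exact: (proj2 sq1)].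
Qed.

Lemma Emx_unit r s : Emx r s \in unitmx.
Proof. by have [] := mulmx1_unit (Emx_sq r s). Qed.

Lemma two_nz : (2%:R : R) != 0.
Proof. by apply/eqP; rewrite mulr2n RE_add RE_1 RE_0; lra. Qed.

Lemma bnd2 (b c : bool) : Rle (Rabs (b%:R + c%:R : R)) (R1 + R1).
Proof.
case: b; case: c; rewrite ?mulr1n ?mulr0n ?RE_add ?RE_1 ?RE_0.
- rewrite Rabs_pos_eq; lra.
- rewrite Rabs_pos_eq; lra.
- rewrite Rabs_pos_eq; lra.
- rewrite Rabs_pos_eq; lra.
Qed.

Lemma bnd1 (b : bool) : Rle (Rabs (b%:R : R)) (R1 + R1).
Proof.
case: b; rewrite ?mulr1n ?mulr0n ?RE_1 ?RE_0.
- rewrite Rabs_pos_eq; lra.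
- rewrite Rabs_pos_eq; lra.
Qed.

Lemma shift n (M H : 'M[R]_n) (u0 w wh : 'cV[R]_n) :
  M *m (H *m u0 + wh) + w = H *m (M *m u0 + w) + wh ->
  (M - 1) *m (H *m u0 + wh) + w = H *m ((M - 1) *m u0 + w).
Proof.
move=> c; rewrite !mulmxBl !mul1mx addrAC c.
by rewrite [M *m u0 - u0 + w]addrAC mulmxBr opprD addrACA subrr addr0.
Qed.

Lemma id_cent r s (G : (vec (r + s) -> vec (r + s)) -> Prop) :
  centralizer_Iso r s G (fun x => x).
Proof.
split=> //.
exists (fun i j => (i == j)%:R), (fun _ => R0).
have hm : forall x : vec (r + s), mxact (fun i j => (i == j)%:R) x = x.
  move=> x; apply: cv_inj; rewrite cv_mxact.
  have -> : mxo (fun i j : 'I_(r + s) => (i == j)%:R) = 1%:M.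
    by apply/matrixP => i j; rewrite !mxE.
  by rewrite mul1mx.
split.
  move=> x; apply: cv_inj; rewrite cv_vadd hm cv0 addr0 //.
by move=> x y; rewrite !hm.
Qed.

Lemma cv_lin n (g : vec n -> vec n) M w y :
  (forall u, cv (g (vc u)) = M *m u + w) -> cv (linpart g y) = M *m cv y.
Proof.
move=> hg; rewrite /linpart cv_vsub.
have -> : (fun _ : 'I_n => R0) = vc 0.
  by apply: functional_extensionality => i; rewrite /vc mxE.
by rewrite -{1}(cvK y) !hg mulmx0 add0r addrK.
Qed.

Lemma S_zero r s (G : (vec (r + s) -> vec (r + s)) -> Prop) x0
  (M1 M2 : 'M[R]_(r + s)) (w1 w2 : 'cV[R]_(r + s)) g1 g2 :
  is_open (iso_orbit (centralizer_Iso r s G) x0) ->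
  G g1 -> G g2 ->
  (forall u, cv (g1 (vc u)) = M1 *m u + w1) ->
  (forall u, cv (g2 (vc u)) = M2 *m u + w2) ->
  (M1 - 1)^T *m Emx r s *m (M2 - 1) + ((M1 - 1)^T *m Emx r s *m (M2 - 1))^T = 0.
Proof.
move=> hop hg1 hg2 h1 h2.
have hx0 : iso_orbit (centralizer_Iso r s G) x0 x0 by exists (fun x => x); split => //; exact: id_cent.
have [eps [he hball]] := hop x0 hx0.
set u0 := cv x0.
set P := fun u => iso_orbit (centralizer_Iso r s G) x0 (vc u).
have hb : forall u : 'cV[R]_(r + s), (forall k, Rlt (Rabs (u k 0 - u0 k 0)) eps) -> P u.
  move=> u hu; apply: hball => i; have := hu i; by rewrite /u0 /cv mxE.
have hq : forall u, P u -> ((M1 - 1) *m u + w1)^T *m Emx r s *m ((M2 - 1) *m u + w2) =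
                    ((M1 - 1) *m u0 + w1)^T *m Emx r s *m ((M2 - 1) *m u0 + w2).
  move=> u [h [[hh hcomm] hu]].
  have [H [wh [hH hHE]]] := iso_mx hh.
  have eu : u = H *m u0 + wh by rewrite -(vcK u) hu -hH /u0 cvK.
  have comm : forall g M w, G g -> (forall u, cv (g (vc u)) = M *m u + w) ->
      (M - 1) *m u + w = H *m ((M - 1) *m u0 + w).
    move=> g M w hg hgs; rewrite eu; apply: shift.
    have := congr1 (@cv _) (hcomm g hg x0).
    have ex : x0 = vc u0 by rewrite /u0 cvK.
    rewrite ex -[g (vc u0)]cvK -[h (vc u0)]cvK !hH !hgs ?hH.
    by move=> ->.
  rewrite (comm _ _ _ hg1 h1) (comm _ _ _ hg2 h2).
  transitivity (((M1 - 1) *m u0 + w1)^T *m (H^T *m Emx r s *m H) *m ((M2 - 1) *m u0 + w2)).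
    by rewrite trmx_mul !mulmxA.
  by rewrite hHE.
have hv := vanish he hb hq.
have hz : forall z : 'cV[R]_(r + s), (forall k, Rle (Rabs (z k 0)) (R1 + R1)) ->
    (z^T *m ((M1 - 1)^T *m Emx r s *m (M2 - 1)) *m z) = 0.
  by move=> z hzb; rewrite -(hv z hzb) trmx_mul !mulmxA.
apply: polar.
  move=> i j /=; rewrite hz ?mxE //; move=> k; rewrite !mxE; exact: bnd2.
move=> i; rewrite hz ?mxE //; move=> k; rewrite !mxE; exact: bnd1.
Qed.

Lemma X_tr n (E A B : 'M[R]_n) : E^T = E -> (A^T *m E *m B)^T = B^T *m E *m A.
Proof. by move=> hE; rewrite !trmx_mul trmxK hE mulmxA. Qed.

Lemma self_facts n (E A : 'M[R]_n) : E^T = E -> E \in unitmx ->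
  (A + 1)^T *m E *m (A + 1) = E ->
  A^T *m E *m A + (A^T *m E *m A)^T = 0 ->
  A^T *m E = - (E *m A) /\ A *m A = 0.
Proof.
move=> hE hEu hM hS.
have hX : A^T *m E *m A = 0.
  move: hS; rewrite X_tr // -mulr2n -scaler_nat => /eqP.
  by rewrite scalemx_eq0 (negbTE two_nz) => /eqP.
have sk : A^T *m E = - (E *m A).
  move: hM; rewrite [(A + 1)^T]linearD /= trmx1 !mulmxDl !mulmxDr !mul1mx !mulmx1 hX add0r.
  rewrite addrA addrC => /addr_eqself /eqP; rewrite addr_eq0 => /eqP.
  done.
split => //.
rewrite -(mulKmx hEu (A *m A)) [E *m (A *m A)]mulmxA -[E *m A]opprK -sk mulNmx hX oppr0 mulmx0 //.
Qed.

Lemma final_mx n (E M1 M2 : 'M[R]_n) : E^T = E -> E \in unitmx ->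
  M1^T *m E *m M1 = E -> M2^T *m E *m M2 = E ->
  (M1 - 1)^T *m E *m (M1 - 1) + ((M1 - 1)^T *m E *m (M1 - 1))^T = 0 ->
  (M2 - 1)^T *m E *m (M2 - 1) + ((M2 - 1)^T *m E *m (M2 - 1))^T = 0 ->
  (M1 - 1)^T *m E *m (M2 - 1) + ((M1 - 1)^T *m E *m (M2 - 1))^T = 0 ->
  M1 *m M2 != M2 *m M1 -> (8 <= n)%N.
Proof.
move=> hE hEu hM1 hM2 S11 S22 S12 hnc.
have e1 : M1 = (M1 - 1) + 1 by rewrite subrK.
have e2 : M2 = (M2 - 1) + 1 by rewrite subrK.
rewrite e1 in hM1; rewrite e2 in hM2; rewrite e1 e2 in hnc.
move: hM1 hM2 S11 S22 S12 hnc.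
move: (M1 - 1) (M2 - 1) => A1 A2 hM1 hM2 S11 S22 S12 hnc.
have [sk1 q1] := self_facts hE hEu hM1 S11.
have [sk2 q2] := self_facts hE hEu hM2 S22.
have ac : A1 *m A2 = - (A2 *m A1).
  move: S12; rewrite X_tr // sk1 sk2 !mulNmx -!mulmxA -opprD -mulmxDr.
  move/eqP; rewrite oppr_eq0 => /eqP h.
  have : A1 *m A2 + A2 *m A1 = 0 by rewrite -(mulKmx hEu (_ + _)) h mulmx0.
  by move/eqP; rewrite addr_eq0 => /eqP.
apply: (main_mx two_nz hE hEu sk1 sk2 q1 q2 ac).
apply: contra hnc => /eqP h.
have h' : A2 *m A1 = 0 by rewrite -[A2 *m A1]opprK -ac h oppr0.
rewrite !mulmxDl !mulmxDr !mul1mx !mulmx1 h h' add0r.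
by rewrite add0r !addrA (addrC A1 A2).
Qed.

Local Close Scope ring_scope.

Theorem theorem5p1 (r s : nat) (G : (vec (r + s) -> vec (r + s)) -> Prop) :
  is_subgroup_Iso r s G ->
  (exists x, is_open (iso_orbit (centralizer_Iso r s G) x)) ->
  ~ hol_abelian G ->
  (8 <= r + s)%N.
Proof.
move=> [hiso [hid [hcomp hinv]]] [x0 hop] hna.
have [g1 [g2 [x [hg1 [hg2 hne]]]]] : exists g1 g2 x, G g1 /\ G g2 /\
    linpart g1 (linpart g2 x) <> linpart g2 (linpart g1 x).
  apply: NNPP => H; apply: hna => g1 g2 h1 h2 x; apply: NNPP => hn; apply: H.
  by exists g1, g2, x.
have [M1 [w1 [h1 hM1]]] := iso_mx (hiso _ hg1).
have [M2 [w2 [h2 hM2]]] := iso_mx (hiso _ hg2).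
apply: (final_mx (Emx_tr r s) (Emx_unit r s) hM1 hM2 (S_zero hop hg1 hg1 h1 h1)
  (S_zero hop hg2 hg2 h2 h2) (S_zero hop hg1 hg2 h1 h2)).
apply/negP => /eqP hc; apply: hne; apply: cv_inj.
by rewrite (cv_lin _ h1) (cv_lin _ h2) (cv_lin _ h2) (cv_lin _ h1) !mulmxA hc.
Qed.
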